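(* Let $G$ be an $l$-group (a topological group with a basis of neighbourhoods of the identity consisting of compact open subgroups), $N\subset G$ a closed normal subgroup, $\chi$ a continuous character of $N$, and $\Gamma\subset G$ a discrete subgroup such that $\chi|_{\Gamma\cap N}\equiv1$, the image of $\Gamma$ in $G/N$ is discrete, and conjugation by $\Gamma$ preserves $\chi$. Let $\chi'$ be the unique character of $\Gamma N$ trivial on $\Gamma$ and extending $\chi$. Then the map of $G$-representations $$\Theta:\operatorname{Ind}_N^G\chi\to\operatorname{Ind}_{\Gamma N}^G\chi',\qquad \Theta(\phi)(g)=\sum_{\gamma\in\Gamma/(\Gamma\cap N)}\phi(\gamma g)$$ is surjective.
   Context: For a closed subgroup $H\subset G$ and a character $\rho$ of $H$, the compactly induced representation $\operatorname{Ind}_H^G\rho$ is the space of locally constant functions $f:G\to\mathbb C$ with $f(hg)=\rho(h)f(g)$ for $h\in H$, $g\in G$, whose support is compact modulo $H$, with $G$ acting by right translation. *)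

(* Defs.v *)
From mathcomp Require Import all_boot all_algebra.
From mathcomp Require Import all_classical all_reals all_analysis.
From mathcomp Require Import complex.
Import numFieldTopology.Exports numFieldNormedType.Exports.
Set Implicit Arguments.
Unset Strict Implicit.
Unset Printing Implicit Defensive.
Local Open Scope ring_scope.
Local Open Scope classical_set_scope.

(* The field of complex numbers C = R[i] (R a real closed complete field),
   seen as a numFieldType so that it carries its norm topology. *)
Definition Cx (R : realType) : numFieldType := R[i].

Section TopGroup.
Variables (G : topologicalType) (mul : G -> G -> G) (inv : G -> G) (e : G).

Definition is_group_law : Prop :=
  [/\ associative mul, left_id e mul & left_inverse e inv mul].

Definition is_topological_group : Prop :=
  [/\ is_group_law, continuous (fun p : G * G => mul p.1 p.2) & continuous inv].

Definition is_subgroup (H : set G) : Prop :=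
  H e /\ (forall x y, H x -> H y -> H (mul x (inv y))).

Definition is_lgroup : Prop :=
  is_topological_group /\
  (forall U, nbhs e U ->
     exists K : set G, [/\ is_subgroup K, compact K, open K & K `<=` U]).

Definition is_normal_subgroup (N : set G) : Prop :=
  is_subgroup N /\ (forall g n, N n -> N (mul (mul g n) (inv g))).

Definition is_discrete (S : set G) : Prop :=
  forall x, S x -> exists U : set G, open U /\ U `&` S = [set x].

(* A set W of G is N-saturated if it is a union of cosets gN; open subsets of
   G/N are exactly the images of open N-saturated subsets of G. *)
Definition saturated (N : set G) (W : set G) : Prop :=
  forall g n, W g -> N n -> W (mul g n).

(* The image of Gamma in G/N (quotient topology) is discrete: every point
   gamma N of the image is isolated, i.e. has an open neighbourhood in G/N
   (= image of an open N-saturated set W of G containing gamma) meeting the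
   image of Gamma only in gamma N. *)
Definition discrete_image_mod (N Gamma : set G) : Prop :=
  forall gam, Gamma gam ->
    exists W : set G, [/\ open W, saturated N W, W gam &
      forall del, Gamma del -> W del -> exists2 n, N n & del = mul gam n].

Definition grp_setmul (A B : set G) : set G :=
  [set g | exists a, exists b, [/\ A a, B b & g = mul a b]].

(* a character (homomorphism to C^x) of the subgroup H, given as a function
   on G of which only the values on H matter *)
Definition is_character (R : realType) (H : set G) (chi : G -> Cx R) : Prop :=
  (forall h k, H h -> H k -> chi (mul h k) = chi h * chi k) /\
  (forall h, H h -> chi h != 0).

Definition is_continuous_character (R : realType) (H : set G)
    (chi : G -> Cx R) : Prop :=
  is_character H chi /\ {within H, continuous chi}.

Definition locally_constant_fun (R : realType) (f : G -> Cx R) : Prop :=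
  forall x, \forall y \near x, f y = f x.

Definition supp_nz (R : realType) (f : G -> Cx R) : set G :=
  closure [set g | f g != 0].

Definition compact_mod (H : set G) (S : set G) : Prop :=
  exists K : set G, compact K /\ S `<=` grp_setmul H K.

Definition cInd (R : realType) (H : set G) (rho : G -> Cx R) : set (G -> Cx R) :=
  [set f | [/\ locally_constant_fun f,
              (forall h g, H h -> f (mul h g) = rho h * f g) &
              compact_mod H (supp_nz f)]].

Definition is_coset_transversal (Gamma N T : set G) : Prop :=
  T `<=` Gamma /\
  (forall gam, Gamma gam -> exists! r, T r /\ N (mul (inv r) gam)).

Definition Theta (R : realType) (T : set G) (phi : G -> Cx R) (g : G) : Cx R :=
  \sum_(r \in T) phi (mul r g).

End TopGroup.

(* Main.v *)
Require Import Defs.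
From mathcomp Require Import all_boot all_algebra.
From mathcomp Require Import all_classical all_reals all_analysis.
From mathcomp Require Import complex.
Import numFieldTopology.Exports numFieldNormedType.Exports.
Local Open Scope ring_scope.
Local Open Scope classical_set_scope.
From mathcomp Require Import all_order finmap.
Import Order.TTheory GRing.Theory Num.Theory.
Set Implicit Arguments.
Unset Strict Implicit.
Unset Printing Implicit Defensive.

Lemma fin_cover (X : topologicalType) (K : set X) (U : X -> set X) :
  compact K -> (forall x, nbhs x (U x)) ->
  exists D : {fset X}, K `<=` \bigcup_(x in [set` D]) U x.
Proof.
move=> /compact_near_coveringP cK Ux.
pose F := filter_from [set: {fset X}] (fun D0 => [set D : {fset X} | (D0 `<=` D)%fset]).
have FF : Filter F.
  apply: filter_from_filter; first by exists fset0.
  move=> A B _ _; exists (A `|` B)%fset => //= D /= sub; split => /=.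
    exact: fsubset_trans (fsubsetUl _ _) sub.
  exact: fsubset_trans (fsubsetUr _ _) sub.
have := cK {fset X} F (fun D x => exists2 y, y \in D & U y x) FF.
case.
- move=> x Kx; exists (U x, [set D : {fset X} | ([fset x] `<=` D)%fset]) => /=.
    split => //; exists [fset x]%fset => //.
  move=> [x' D] /= [Ux' sD]; exists x => //.
  by move/fsubsetP : sD; apply; rewrite inE.
- move=> D0 _ /(_ D0 (fsubset_refl _)) H; exists D0 => x /H [y yD Uy].
  by exists y.
Qed.

Section Grp.
Variables (G : Type) (mul : G -> G -> G) (inv : G -> G) (e : G).
Hypotheses (mA : associative mul) (m1 : left_id e mul) (mV : left_inverse e inv mul).

Lemma gmulgV x : mul x (inv x) = e.
Proof.
rewrite -[LHS]m1 -{1}(mV (inv x)) -mA (mA (inv x) x) mV m1.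
exact: mV.
Qed.

Lemma gmulg1 x : mul x e = x.
Proof. by rewrite -(mV x) mA gmulgV m1. Qed.

Lemma gmulKg x y : mul (inv x) (mul x y) = y.
Proof. by rewrite mA mV m1. Qed.

Lemma gmulKVg x y : mul x (mul (inv x) y) = y.
Proof. by rewrite mA gmulgV m1. Qed.

Lemma gmulgK x y : mul (mul x y) (inv y) = x.
Proof. by rewrite -mA gmulgV gmulg1. Qed.

Lemma gmulgKV x y : mul (mul x (inv y)) y = x.
Proof. by rewrite -mA mV gmulg1. Qed.

Lemma ginvK x : inv (inv x) = x.
Proof. by rewrite -[RHS](gmulKg (inv x)) mV gmulg1. Qed.

Lemma ginvM x y : inv (mul x y) = mul (inv y) (inv x).
Proof.
have h : mul (mul x y) (mul (inv y) (inv x)) = e by rewrite mA gmulgK gmulgV.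
by rewrite -[LHS]gmulg1 -h gmulKg.
Qed.

Lemma ginv1 : inv e = e.
Proof. by rewrite -[LHS]m1 gmulgV. Qed.

End Grp.

Lemma cont_lmul (G : topologicalType) (mul : G -> G -> G) (a : G) : continuous (fun p : G * G => mul p.1 p.2) -> continuous (mul a).
Proof.
move=> cm x.
apply: (@continuous_comp _ _ _ (fun y => (a, y)) (fun p : G * G => mul p.1 p.2)).
  by apply: cvg_pair; [exact: cvg_cst|exact: cvg_id].
exact: cm.
Qed.

Lemma cont_rmul (G : topologicalType) (mul : G -> G -> G) (a : G) : continuous (fun p : G * G => mul p.1 p.2) -> continuous (mul^~ a).
Proof.
move=> cm x.
apply: (@continuous_comp _ _ _ (fun y => (y, a)) (fun p : G * G => mul p.1 p.2)).
  by apply: cvg_pair; [exact: cvg_id|exact: cvg_cst].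
exact: cm.
Qed.

Ltac grpnorm mA m1 mV :=
  repeat (first [ rewrite !(ginvM mA m1 mV) | rewrite !(ginvK mA m1 mV) | rewrite !mA
      | rewrite !(gmulgK mA m1 mV) | rewrite !(gmulgKV mA m1 mV)
      | rewrite !(gmulgV mA m1 mV) | rewrite !(gmulg1 mA m1 mV) | rewrite !m1
      | rewrite !mV | rewrite !(ginv1 mA m1 mV)]).

Section Main.
Variables (R : realType) (G : topologicalType) (mul : G -> G -> G) (inv : G -> G) (e : G).
Hypotheses (mA : associative mul) (m1 : left_id e mul) (mV : left_inverse e inv mul).
Hypothesis cm : continuous (fun p : G * G => mul p.1 p.2).
Hypothesis lg : forall U, nbhs e U ->
  exists K : set G, [/\ is_subgroup mul inv e K, compact K, open K & K `<=` U].
Variables (N Gamma : set G) (chi chi' : G -> Cx R) (T : set G).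
Hypothesis Nsub : is_subgroup mul inv e N.
Hypothesis Nnorm : forall g n, N n -> N (mul (mul g n) (inv g)).
Hypothesis Gsub : is_subgroup mul inv e Gamma.
Hypothesis Wdisc : discrete_image_mod mul N Gamma.
Hypothesis chi'G : forall gam, Gamma gam -> chi' gam = 1.
Hypothesis chi'N : forall n, N n -> chi' n = chi n.
Hypothesis Ttr : is_coset_transversal mul inv Gamma N T.
Variable F : G -> Cx R.
Hypothesis FI : cInd mul (grp_setmul mul Gamma N) chi' F.

Lemma sg_inv (S : set G) x : is_subgroup mul inv e S -> S x -> S (inv x).
Proof. by move=> [S1 SM] Sx; rewrite -[inv x]m1; apply: SM. Qed.

Lemma sg_mul (S : set G) x y : is_subgroup mul inv e S -> S x -> S y -> S (mul x y).
Proof.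
move=> sS Sx Sy; rewrite -[y](ginvK mA m1 mV); have [_ SM] := sS.
by apply: SM => //; apply: sg_inv.
Qed.

Lemma lt_open (a : G) (U : set G) : open U -> open (mul a @` U).
Proof.
move=> oU; have -> : mul a @` U = mul (inv a) @^-1` U.
  apply/seteqP; split => y /=.
    by move=> [u Uu <-]; rewrite (gmulKg mA m1 mV).
  by move=> Uy; exists (mul (inv a) y) => //; rewrite (gmulKVg mA m1 mV).
by have /continuousP := @cont_lmul _ mul (inv a) cm; apply.
Qed.

Lemma lt_nbhs (a : G) (U : set G) : open U -> U e -> nbhs a (mul a @` U).
Proof.
move=> oU Ue; apply: open_nbhs_nbhs; split; first exact: lt_open.
by exists e => //; rewrite (gmulg1 mA m1 mV).
Qed.

Lemma exists_C : exists C K0, [/\ compact C, is_subgroup mul inv e K0 /\ open K0,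
  (forall c k, C c -> K0 k -> C (mul c k)),
  (forall g k, K0 k -> F (mul g k) = F g) &
  (forall g, F g != 0 -> exists gam n c, [/\ Gamma gam, N n, C c & g = mul (mul gam n) c])].
Proof.
move: FI => [Flc Feq [K [cK sK]]].
have hK k : exists Kk : set G, [/\ is_subgroup mul inv e Kk, compact Kk, open Kk &
    Kk `<=` [set x | F (mul k x) = F k]].
  apply: lg.
  have : nbhs (mul k e) [set y | F y = F k] by rewrite (gmulg1 mA m1 mV); exact: Flc.
  by move=> /(@cont_lmul _ mul k cm e).
have [Kf hKf] := choice hK.
have [D cD] := @fin_cover _ K (fun k => mul k @` Kf k) cK
   (fun k => lt_nbhs k (let: And4 _ _ o _ := hKf k in o) (let: And4 s _ _ _ := hKf k in s.1)).
have : nbhs e (\bigcap_(k in [set` D]) Kf k).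
  apply: filter_bigI => k _; apply: open_nbhs_nbhs.
  by have [[s1 _] _ o _] := hKf k; split.
move=> /lg [K0 [sK0 _ oK0 K0sub]].
exists (\bigcup_(k in [set` D]) (mul k @` Kf k)), K0; split => //.
- rewrite -bigsetU_fset_set; last exact: finite_fset.
  apply: bigsetU_compact => k _; apply: continuous_compact.
    exact/continuous_subspaceT/cont_lmul.
  by have [] := hKf k.
- move=> c k0 [k Dk [u Ku <-]] K0k0; exists k => //; exists (mul u k0); last by rewrite mA.
  by apply: sg_mul; [have [] := hKf k|by []|exact: K0sub].
- have claim g k0 : F g != 0 -> K0 k0 -> F (mul g k0) = F g.
    move=> Fg0 K0k0.
    have /sK [a [b [[gam [n [Gg Nn ->]]] Kb ->]]] : supp_nz F g by apply: subset_closure.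
    have [k Dk [u Ku <-]] := cD _ Kb.
    have Hgn : grp_setmul mul Gamma N (mul gam n) by exists gam, n.
    rewrite -(mA (mul gam n)) !(Feq (mul gam n)) //; congr (_ * _).
    have [_ _ _ sub] := hKf k.
    rewrite (sub u Ku) -(mA k) (sub (mul u k0)) //.
    by apply: sg_mul; [have [] := hKf k|by []|exact: K0sub].
  move=> g k0 K0k0; have [Fg0|Fg0] := eqVneq (F g) 0; last exact: claim.
  have [Fgk0|Fgk0] := eqVneq (F (mul g k0)) 0; first by rewrite Fg0 Fgk0.
  have := claim _ (inv k0) Fgk0 (sg_inv sK0 K0k0).
  by rewrite (gmulgK mA m1 mV) => ->.
- move=> g Fg0.
  have /sK [a [b [[gam [n [Gg Nn ->]]] Kb ->]]] : supp_nz F g by apply: subset_closure.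
  by exists gam, n, b; split => //; apply: cD.
Qed.

Lemma Nconj' x n : N n -> N (mul (mul (inv x) n) x).
Proof. by move=> Nn; rewrite -{2}(ginvK mA m1 mV x); apply: Nnorm. Qed.

Lemma T_uniq gam a b : Gamma gam -> T a -> N (mul (inv a) gam) ->
  T b -> N (mul (inv b) gam) -> a = b.
Proof.
move=> Gg Ta Na Tb Nb; have [_ /(_ gam Gg) [x [_ ux]]] := Ttr.
by rewrite -(ux a) ?(ux b).
Qed.

Lemma T_Gamma r : T r -> Gamma r.
Proof. by have [+ _] := Ttr; apply. Qed.

Lemma finS (C : set G) g : compact C ->
  finite_set [set r | T r /\ grp_setmul mul N C (mul r g)].
Proof.
move=> cC.
have [W [oW satW We WG]] := Wdisc Gsub.1.
have cf : continuous (fun x => mul (mul g x) (inv g)).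
  move=> x; apply: (@continuous_comp _ _ _ (mul g) (mul^~ (inv g))).
    exact: cont_lmul.
  exact: cont_rmul.
have : nbhs (mul (mul g e) (inv g)) W.
  by rewrite (gmulg1 mA m1 mV) (gmulgV mA m1 mV); apply: open_nbhs_nbhs.
move=> /(cf e) /lg [Kg [sKg _ oKg Kgsub]].
have [D' cD'] := @fin_cover _ C (fun c => mul c @` Kg) cC (fun c => lt_nbhs c oKg sKg.1).
pose A c := [set r | T r /\ exists n k, [/\ N n, Kg k & mul r g = mul n (mul c k)]].
have key c r r' : A c r -> A c r' -> r = r'.
  move=> [Tr [n [k [Nn Kk E]]]] [Tr' [n' [k' [Nn' Kk' E']]]].
  have Er : r = mul (mul n (mul c k)) (inv g) by rewrite -E (gmulgK mA m1 mV).
  have Er' : r' = mul (mul n' (mul c k')) (inv g) by rewrite -E' (gmulgK mA m1 mV).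
  have Gr := T_Gamma Tr; have Gr' := T_Gamma Tr'.
  have Wrr : W (mul (inv r) r').
    pose m := mul (mul (inv c) (mul (inv n) n')) c.
    pose m' := mul (mul (inv k') m) k'.
    have -> : mul (inv r) r' = mul (mul (mul g (mul (inv k) k')) (inv g))
        (mul (mul g m') (inv g)).
      by rewrite Er Er' /m' /m; grpnorm mA m1 mV.
    apply: satW; first by apply: Kgsub; apply: sg_mul => //; exact: sg_inv.
    apply: Nnorm; apply: Nconj'; apply: Nconj'.
    by apply: sg_mul => //; exact: sg_inv.
  have [n0 Nn0] := WG _ (sg_mul Gsub (sg_inv Gsub Gr) Gr') Wrr.
  rewrite m1 => E0.
  apply: (T_uniq Gr' Tr _ Tr'); first by rewrite E0.
  by rewrite mV; exact: Nsub.1.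
apply: (@sub_finite_set _ _ (\bigcup_(c in [set` D']) A c)).
  move=> r [Tr [n [c0 [Nn Cc0 E]]]].
  have [c Dc [k Kk Ek]] := cD' _ Cc0.
  by exists c => //; split => //; exists n, k; split => //; rewrite E Ek.
apply: bigcup_finite; first exact: finite_fset.
move=> c _; have [[r0 Ar0]|nA] := pselect (exists r, A c r).
  apply: (@sub_finite_set _ _ [set r0]); last exact: finite_set1.
  by move=> r Ar; apply: (key c).
apply: (@sub_finite_set _ _ set0); last exact: finite_set0.
by move=> r Ar; apply: nA; exists r.
Qed.

Lemma main_exists : exists phi, [/\ cInd mul N chi phi,
    (forall g, finite_set (T `&` [set r | phi (mul r g) != 0])) &
    (forall g, F g = Theta mul T phi g)].
Proof.
have [C [K0 [cC [sK0 oK0] CK0 FK0 Fsupp]]] := exists_C.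
move: FI => [Flc Feq _].
pose NC := grp_setmul mul N C.
pose ind x : Cx R := (`[< NC x >])%:R.
pose psi g := \sum_(r \in T) ind (mul r g).
pose phi g := ind g * F g / psi g.
have ind_eq a b : (NC a <-> NC b) -> ind a = ind b.
  by move=> h; rewrite /ind (propext h).
have NC_l n x : N n -> (NC (mul n x) <-> NC x).
  move=> Nn; split.
    move=> [n0 [c [Nn0 Cc E]]]; exists (mul (inv n) n0), c; split => //.
      by apply: sg_mul => //; exact: sg_inv.
    by rewrite -mA -E (gmulKg mA m1 mV).
  move=> [n0 [c [Nn0 Cc ->]]]; exists (mul n n0), c; split => //.
    exact: sg_mul.
have NC_r k x : K0 k -> (NC (mul x k) <-> NC x).
  move=> Kk; split.
    move=> [n0 [c [Nn0 Cc E]]]; exists n0, (mul c (inv k)); split => //.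
      by apply: CK0 => //; exact: sg_inv.
    by rewrite mA -E (gmulgK mA m1 mV).
  move=> [n0 [c [Nn0 Cc ->]]]; exists n0, (mul c k); split => //.
    exact: CK0.
have ind_Nl a b g : N (mul (inv a) b) -> ind (mul b g) = ind (mul a g).
  move=> Nab.
  have -> : mul b g = mul (mul (mul a (mul (inv a) b)) (inv a)) (mul a g).
    by grpnorm mA m1 mV.
  by apply: ind_eq; apply: NC_l; apply: Nnorm.
have psi_N n g : N n -> psi (mul n g) = psi g.
  move=> Nn; apply: eq_fsbigr => r _; rewrite mA; apply: ind_Nl.
  by rewrite (gmulKg mA m1 mV).
have psi_K g k : K0 k -> psi (mul g k) = psi g.
  move=> Kk; apply: eq_fsbigr => r _; rewrite mA; apply: ind_eq; exact: NC_r.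
have hr x : exists y, Gamma x -> T y /\ N (mul (inv y) x).
  have [Gx|nGx] := pselect (Gamma x); last by exists x.
  by have [_ /(_ x Gx) [y [[Ty Ny] _]]] := Ttr; exists y.
have [rep hrep] := choice hr.
have psi_G g r0 : Gamma r0 -> psi (mul r0 g) = psi g.
  move=> Gr0; rewrite /psi [RHS](reindex_fsbig (fun r => rep (mul r r0)) T T).
    apply: eq_fsbigr => r /set_mem Tr; rewrite mA; apply: ind_Nl.
    by have [] := hrep (mul r r0) (sg_mul Gsub (T_Gamma Tr) Gr0).
  split.
  - move=> r Tr /=.
    by have [] := hrep (mul r r0) (sg_mul Gsub (T_Gamma Tr) Gr0).
  - move=> r1 r2 /set_mem T1 /set_mem T2 /= E.
    have [_ N1] := hrep (mul r1 r0) (sg_mul Gsub (T_Gamma T1) Gr0).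
    have [_ N2] := hrep (mul r2 r0) (sg_mul Gsub (T_Gamma T2) Gr0).
    rewrite E in N1.
    apply: (T_uniq (T_Gamma T2) T1 _ T2); last by rewrite mV; exact: Nsub.1.
    set t := rep (mul r2 r0) in N1 N2.
    have -> : mul (inv r1) r2 = mul (mul r0 (mul (inv (mul (inv t) (mul r1 r0)))
        (mul (inv t) (mul r2 r0)))) (inv r0) by grpnorm mA m1 mV.
    apply: Nnorm; apply: sg_mul => //; exact: sg_inv.
  - move=> t Tt.
    have Gx : Gamma (mul t (inv r0)) by apply: sg_mul => //; [exact: T_Gamma|exact: sg_inv].
    have [Tr Nr] := hrep _ Gx; set r := rep (mul t (inv r0)) in Tr Nr *.
    exists r => //.
    have Grr : Gamma (mul r r0) by apply: sg_mul => //; exact: T_Gamma.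
    have [Tq Nq] := hrep _ Grr.
    apply: (T_uniq Grr Tq Nq Tt).
    have -> : mul (inv t) (mul r r0) =
      mul (mul (inv r0) (inv (mul (inv r) (mul t (inv r0))))) r0 by grpnorm mA m1 mV.
    by apply: Nconj'; exact: sg_inv.
have ind_ge0 x : 0 <= ind x by rewrite /ind ler0n.
have phiNC y : phi y != 0 -> NC y.
  move=> ph; apply: contrapT => nNC; move: ph.
  by rewrite /phi /ind asboolF // !mul0r eqxx.
have psi_nz g : F g != 0 -> psi g != 0.
  move=> Fg0; have [gam [n [c [Gg Nn Cc Eg]]]] := Fsupp g Fg0.
  have [Tr Nr] := hrep _ (sg_inv Gsub Gg); set r := rep (inv gam) in Tr Nr.
  have NCr : NC (mul r g).
    exists (mul (mul (mul r (inv (mul (inv r) (inv gam)))) (inv r)) n), c; split => //.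
      by apply: sg_mul => //; apply: Nnorm; exact: sg_inv.
    by rewrite Eg; grpnorm mA m1 mV.
  pose S := [set t | T t /\ NC (mul t g)].
  have finSg : finite_set S := finS g cC.
  rewrite /psi -(fsbig_widen S T (fun t => ind (mul t g))); first last.
  - move=> t [Tt nS] /=; rewrite /ind asboolF //.
    by move=> NCt; apply: nS.
  - by move=> t [].
  rewrite (fsbigD1 r) //= /ind asboolT //.
  apply: lt0r_neq0; apply: (lt_le_trans ltr01); rewrite lerDl.
  by apply: fsumr_ge0 => t _.
exists phi; split.
- split.
  + move=> x; apply: (filterS _ (lt_nbhs x oK0 sK0.1)).
    move=> y [k Kk <-]; rewrite /phi FK0 // psi_K //.
    by rewrite (ind_eq _ x) //; exact: NC_r.
  + move=> h g Nh; rewrite /phi psi_N // (ind_eq _ g); last exact: NC_l.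
    rewrite Feq; last by exists e, h; rewrite m1; split => //; exact: Gsub.1.
    by rewrite chi'N // mulrCA -!mulrA.
  + exists C; split => // x clx.
    have [y [phiy [k Kk Ey]]] := clx _ (lt_nbhs x oK0 sK0.1).
    have := phiNC _ phiy; rewrite -Ey; exact: (proj1 (NC_r k x Kk)).
- move=> g; apply: (sub_finite_set _ (finS g cC)) => r [Tr phir]; split => //.
  exact: phiNC.
- move=> g; rewrite /Theta.
  have -> : \sum_(r \in T) phi (mul r g) = \sum_(r \in T) ind (mul r g) * (F g / psi g).
    apply: eq_fsbigr => r /set_mem Tr; rewrite /phi psi_G; last exact: T_Gamma.
    rewrite Feq; last by exists r, e; split => //; [exact: T_Gamma|exact: Nsub.1|rewrite (gmulg1 mA m1 mV)].
    by rewrite chi'G ?mul1r ?mulrA //; exact: T_Gamma.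
  rewrite -mulr_fsuml -/(psi g).
  have [Fg0|Fg0] := eqVneq (F g) 0; first by rewrite Fg0 mul0r mulr0.
  by rewrite mulrC divfK //; exact: psi_nz.
Qed.

End Main.

Unset Implicit Arguments.

Theorem lemma4p22 (R : realType) (G : topologicalType)
  (mul : G -> G -> G) (inv : G -> G) (e : G)
  (N Gamma : set G) (chi chi' : G -> Cx R) (T : set G) :
  is_lgroup mul inv e ->
  is_normal_subgroup mul inv e N -> closed N ->
  is_continuous_character mul N chi ->
  is_subgroup mul inv e Gamma -> is_discrete Gamma ->
  (forall gam, Gamma gam -> N gam -> chi gam = 1) ->
  discrete_image_mod mul N Gamma ->
  (forall gam n, Gamma gam -> N n -> chi (mul (mul gam n) (inv gam)) = chi n) ->
  (* chi' : the character of Gamma N trivial on Gamma and extending chi *)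
  is_character mul (grp_setmul mul Gamma N) chi' ->
  (forall gam, Gamma gam -> chi' gam = 1) ->
  (forall n, N n -> chi' n = chi n) ->
  (* T : representatives of Gamma / (Gamma cap N) *)
  is_coset_transversal mul inv Gamma N T ->
  forall F, cInd mul (grp_setmul mul Gamma N) chi' F ->
  exists phi, [/\ cInd mul N chi phi,
    (forall g, finite_set (T `&` [set r | phi (mul r g) != 0])) &
    (forall g, F g = Theta mul T phi g)].
Proof.
move=> [[[mA m1 mV] cm cinv] lgK] [Nsub Nnorm] _ _ Gsub _ _ Wdisc _ _ chi'G chi'N Ttr F FI.
exact: (main_exists mA m1 mV cm lgK Nsub Nnorm Gsub Wdisc chi'G chi'N Ttr FI).
Qed.
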